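(* Let $D=2$, $K<C$, and let user and creator types be drawn i.i.d. from the uniform distribution on $\{x\in\mathbb R^2_{\ge0}:\|x\|_2=1\}$. Index the creators in increasing order of angle, so that $c_i=(\cos(X_i\pi/2),\sin(X_i\pi/2))$ where $X_1\le\dots\le X_C$ are the order statistics of $C$ i.i.d. $\mathrm{Uniform}[0,1]$ variables. Define $R_1=\left[0,\frac{X_1+X_{K+1}}2\right]$, $R_i=\left(\frac{X_{i-1}+X_{i+K-1}}2,\frac{X_i+X_{i+K}}2\right]$ for $2\le i\le C-K$, and $R_{C-K+1}=\left(\frac{X_{C-K}+X_C}2,1\right]$. Then at $t=0$, the user-centric algorithm assigns a user with type $(\cos(y\pi/2),\sin(y\pi/2))$, $y\in[0,1]$, to creators $\{i,i+1,\dots,i+K-1\}$ if and only if $y\in R_i$.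
   Context: The user-centric algorithm at $t=0$ assigns each user $i$ the set $UC_0(i)\in\arg\max_{S\subseteq\mathcal C_0,|S|\le K}\sum_{j\in S}u_i^Tc_j$, i.e. her $K$ creators of highest engagement $u_i^Tc_j$. *)

(* Defs.v *)
From mathcomp Require Import all_boot all_order all_algebra.
From mathcomp Require Import reals trigo.
Set Implicit Arguments. Unset Strict Implicit. Unset Printing Implicit Defensive.
Import Order.TTheory GRing.Theory Num.Theory.
Local Open Scope ring_scope.

Section Defs.
Variable R : realType.

Definition angle_pt (a : R) : R * R := (cos (a * pi / 2), sin (a * pi / 2)).

Definition dot2 (u c : R * R) : R := u.1 * c.1 + u.2 * c.2.

(* creators indexed 0..C-1 (0-based), creator j has type angle_pt (X j) *)
Definition engagement_sum (C : nat) (X : nat -> R) (y : R) (S : {set 'I_C}) : R :=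
  \sum_(j in S) dot2 (angle_pt y) (angle_pt (X j)).

(* S is a valid output UC_0 of the user-centric algorithm for the user of
   type angle_pt y : S is in argmax_{|S| <= K} sum_{j in S} u^T c_j *)
Definition is_UC0 (C K : nat) (X : nat -> R) (y : R) (S : {set 'I_C}) : Prop :=
  (#|S| <= K)%N /\
  forall T : {set 'I_C}, (#|T| <= K)%N ->
    engagement_sum X y T <= engagement_sum X y S.

(* the window of creators {i, ..., i+K-1} (0-based; paper's i+1) *)
Definition window (C K i : nat) : {set 'I_C} :=
  [set j : 'I_C | (i <= j < i + K)%N].

(* the region R_i (0-based; paper's R_{i+1}) *)
Definition region (C K : nat) (X : nat -> R) (i : nat) (y : R) : Prop :=
  (if i == 0%N then 0 <= y else (X i.-1 + X (i + K).-1) / 2 < y) /\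
  (if i == (C - K)%N then y <= 1 else y <= (X i + X (i + K)%N) / 2).

End Defs.

(* Main.v *)
Require Import Defs.
From mathcomp Require Import all_boot all_order all_algebra.
From mathcomp Require Import reals trigo.
From mathcomp Require Import ring lra zify.
Import Order.TTheory GRing.Theory Num.Theory.
Local Open Scope ring_scope.

Lemma sum_min (T : finType) (R : realDomainType) (A : {set T}) (w : T -> R) (m : R) :
  (forall a, a \in A -> m <= w a) -> m *+ #|A| <= \sum_(a in A) w a.
Proof. by move=> h; rewrite -sumr_const; apply: ler_sum. Qed.

Lemma sum_max (T : finType) (R : realDomainType) (A : {set T}) (w : T -> R) (m : R) :
  (forall a, a \in A -> w a <= m) -> \sum_(a in A) w a <= m *+ #|A|.
Proof. by move=> h; rewrite -sumr_const; apply: ler_sum. Qed.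

Lemma card_diff (T : finType) (W S : {set T}) :
  (#|S| <= #|W|)%N -> (#|S :\: W| <= #|W :\: S|)%N.
Proof.
move=> h. have h1 := cardsID W S. have h2 := cardsID S W.
rewrite setIC in h2. lia.
Qed.

Lemma comb_key (T : finType) (R : realDomainType) (W S : {set T}) (w : T -> R) :
  (forall a, 0 <= w a) -> (#|S| <= #|W|)%N ->
  (forall a b, a \in W -> b \notin W -> w b <= w a) ->
  \sum_(j in S :\: W) w j <= \sum_(j in W :\: S) w j.
Proof.
move=> h0 hc hab. have hc' := @card_diff _ W S hc.
case: (set_0Vmem (W :\: S)) => [E | [a0 Ha0]].
  rewrite E cards0 leqn0 cards_eq0 in hc'.
  by rewrite (eqP hc') E !big_set0.
have [a Ha Hmin] := arg_minP (P := [pred x | x \in W :\: S]) w Ha0.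
move: Ha; rewrite inE => /setDP [HaW HaS].
have h1 : \sum_(j in S :\: W) w j <= w a *+ #|S :\: W|.
  by apply: sum_max => b /setDP [_ hb]; apply: hab.
have h2 : w a *+ #|W :\: S| <= \sum_(j in W :\: S) w j.
  by apply: sum_min => b hb; apply: Hmin.
apply: (le_trans h1); apply: le_trans h2.
exact: ler_wpMn2l.
Qed.

Lemma comb_key_lt (T : finType) (R : realDomainType) (W S : {set T}) (w : T -> R) :
  (forall a, a \in W -> 0 < w a) -> (#|S| <= #|W|)%N ->
  (forall a b, a \in W -> b \notin W -> w b < w a) -> S != W ->
  \sum_(j in S :\: W) w j < \sum_(j in W :\: S) w j.
Proof.
move=> h0 hc hab hne. have hc' := @card_diff _ W S hc.
case: (set_0Vmem (S :\: W)) => [E | [b0 Hb0]].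
  have : W :\: S != set0.
    apply: contra hne; rewrite setD_eq0 => hWS.
    by rewrite eqEsubset hWS andbT -setD_eq0 E.
  case/set0Pn => a0 Ha0.
  rewrite E big_set0 (big_setD1 a0 Ha0) /=.
  have [HaW _] := setDP Ha0.
  apply: (lt_le_trans (h0 _ HaW)); rewrite lerDl.
  apply: sumr_ge0 => i; rewrite !inE => /andP [_ /andP [_ hi]].
  exact/ltW/h0.
have Ha0 : exists a0, a0 \in W :\: S.
  apply/card_gt0P; apply: leq_trans hc'; apply/card_gt0P; by exists b0.
case: Ha0 => a0 Ha0.
have [a Ha Hmin] := arg_minP (P := [pred x | x \in W :\: S]) w Ha0.
move: Ha; rewrite inE => /setDP [HaW HaS].
apply: (lt_le_trans (y := \sum_(j in S :\: W) w a)).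
  apply: ltr_sum.
    by apply/hasP; exists b0 => //; rewrite mem_index_enum.
  by move=> b /setDP [_ hb]; apply: hab.
rewrite sumr_const.
have h2 : w a *+ #|W :\: S| <= \sum_(j in W :\: S) w j.
  by apply: sum_min => b hb; apply: Hmin.
apply: le_trans h2.
exact: (ler_wpMn2l (ltW (h0 _ HaW)) hc').
Qed.

Lemma comb_le (T : finType) (R : realDomainType) (W S : {set T}) (w : T -> R) :
  (forall a, 0 <= w a) -> (#|S| <= #|W|)%N ->
  (forall a b, a \in W -> b \notin W -> w b <= w a) ->
  \sum_(j in S) w j <= \sum_(j in W) w j.
Proof.
move=> h0 hc hab.
rewrite [X in _ <= X](big_setID S) [X in X <= _](big_setID W) /= setIC lerD2l.
exact: comb_key.
Qed.

Lemma comb_lt (T : finType) (R : realDomainType) (W S : {set T}) (w : T -> R) :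
  (forall a, a \in W -> 0 < w a) -> (#|S| <= #|W|)%N ->
  (forall a b, a \in W -> b \notin W -> w b < w a) -> S != W ->
  \sum_(j in S) w j < \sum_(j in W) w j.
Proof.
move=> h0 hc hab hne.
rewrite [X in _ < X](big_setID S) [X in X < _](big_setID W) /= setIC ltrD2l.
exact: comb_key_lt.
Qed.

Lemma swap_better (T : finType) (R : realDomainType) (W : {set T}) (w : T -> R) a b :
  a \in W -> b \notin W -> w a < w b ->
  exists S : {set T}, (#|S| <= #|W|)%N /\ \sum_(j in W) w j < \sum_(j in S) w j.
Proof.
move=> ha hb hlt. exists (b |: (W :\ a)).
have hb' : b \notin W :\ a by rewrite !inE negb_and hb orbT.
split.
  by rewrite cardsU1 hb' (cardsD1 a W) ha.
by rewrite (big_setU1 _ hb') (big_setD1 a ha) /= ltrD2r.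
Qed.

Lemma engE (R : realType) (y x : R) :
  dot2 (angle_pt y) (angle_pt x) = cos ((y - x) * (pi / 2)).
Proof. rewrite /dot2 /angle_pt /= -cosB; congr cos; rewrite !mulrA; ring. Qed.

Lemma in_0pi (R : realType) (y x : R) : 0 <= x <= 1 -> 0 <= y <= 1 ->
  `|(y - x) * (pi / 2)| \in `[0, pi].
Proof.
move=> hx hy; rewrite in_itv /= normr_ge0 /= normrM.
have hp := pi_gt0 R.
rewrite (ger0_norm (x := pi / 2)); last lra.
have : `|y - x| <= 1 by rewrite ler_norml; lra.
have := normr_ge0 (y - x). nra.
Qed.

Lemma eng_lt (R : realType) (y x z : R) : 0 <= x <= 1 -> 0 <= z <= 1 -> 0 <= y <= 1 ->
  (dot2 (angle_pt y) (angle_pt x) < dot2 (angle_pt y) (angle_pt z)) =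
  ((y - z) ^+ 2 < (y - x) ^+ 2).
Proof.
move=> hx hz hy.
rewrite !engE -[cos ((y - x) * _)]cos_norm -[cos ((y - z) * _)]cos_norm.
rewrite ltr_cos ?in_0pi //.
have hp := pi_gt0 R.
rewrite !normrM ltr_pM2r.
  2: by rewrite !gtr0_norm ?invr_gt0 //; apply: mulr_gt0 => //; rewrite invr_gt0.
by rewrite -ltr_sqr ?inE ?normr_ge0 // !real_normK ?num_real.
Qed.

Lemma eng_le (R : realType) (y x z : R) : 0 <= x <= 1 -> 0 <= z <= 1 -> 0 <= y <= 1 ->
  (dot2 (angle_pt y) (angle_pt z) <= dot2 (angle_pt y) (angle_pt x)) =
  ((y - x) ^+ 2 <= (y - z) ^+ 2).
Proof. by move=> hx hz hy; rewrite leNgt eng_lt // -leNgt. Qed.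

Lemma eng_ge0 (R : realType) (y x : R) : 0 <= x <= 1 -> 0 <= y <= 1 ->
  0 <= dot2 (angle_pt y) (angle_pt x).
Proof.
move=> hx hy; rewrite engE; apply: cos_ge0_pihalf.
have hp := pi_gt0 R. apply/andP; split; nra.
Qed.

Lemma eng_gt0 (R : realType) (y x : R) : (y - x) ^+ 2 < 1 ->
  0 < dot2 (angle_pt y) (angle_pt x).
Proof.
move=> h; rewrite engE; apply: cos_gt0_pihalf.
have hp := pi_gt0 R.
have h1 : -1 < y - x < 1.
  apply/andP; split; nra.
case/andP: h1 => h1 h2.
apply/andP; split; nra.
Qed.

Lemma sq_lt1 (R : realDomainType) (y x z : R) : x < z -> x + z < 2 * y ->
  (y - z) ^+ 2 < (y - x) ^+ 2.
Proof.
move=> h1 h2; rewrite -subr_gt0.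
have -> : (y - x) ^+ 2 - (y - z) ^+ 2 = (z - x) * (2 * y - x - z) by ring.
apply: mulr_gt0; lra.
Qed.

Lemma sq_le1 (R : realDomainType) (y x z : R) : x <= z -> x + z <= 2 * y ->
  (y - z) ^+ 2 <= (y - x) ^+ 2.
Proof.
move=> h1 h2; rewrite -subr_ge0.
have -> : (y - x) ^+ 2 - (y - z) ^+ 2 = (z - x) * (2 * y - x - z) by ring.
apply: mulr_ge0; lra.
Qed.

Lemma sq_lt2 (R : realDomainType) (y x z : R) : x < z -> 2 * y < x + z ->
  (y - x) ^+ 2 < (y - z) ^+ 2.
Proof.
move=> h1 h2; rewrite -subr_gt0.
have -> : (y - z) ^+ 2 - (y - x) ^+ 2 = (z - x) * (x + z - 2 * y) by ring.
apply: mulr_gt0; lra.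
Qed.

Lemma sq_le2 (R : realDomainType) (y x z : R) : x <= z -> 2 * y <= x + z ->
  (y - x) ^+ 2 <= (y - z) ^+ 2.
Proof.
move=> h1 h2; rewrite -subr_ge0.
have -> : (y - z) ^+ 2 - (y - x) ^+ 2 = (z - x) * (x + z - 2 * y) by ring.
apply: mulr_ge0; lra.
Qed.

Lemma Xle (R : realType) (C : nat) (X : nat -> R)
  (hXinc : forall j, (j.+1 < C)%N -> X j < X j.+1) j k :
  (j <= k)%N -> (k < C)%N -> X j <= X k.
Proof.
move=> hjk; rewrite -(subnKC hjk); elim: (k - j)%N => [|d IH] h.
  by rewrite addn0.
rewrite addnS in h *; apply: le_trans (IH _) _; first lia.
apply/ltW/hXinc; lia.
Qed.

Lemma Xlt (R : realType) (C : nat) (X : nat -> R)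
  (hXinc : forall j, (j.+1 < C)%N -> X j < X j.+1) j k :
  (j < k)%N -> (k < C)%N -> X j < X k.
Proof.
move=> hjk hk; have h1 := @Xle R C X hXinc _ _ hjk hk.
have h2 : X j < X j.+1 by apply: hXinc; lia.
exact: lt_le_trans h2 h1.
Qed.

Lemma card_window (R : realType) (C K i : nat) : (i + K <= C)%N -> #|window C K i| = K.
Proof.
move=> h; rewrite /window -sum1_card.
rewrite (eq_bigl (fun j : 'I_C => (i <= j < i + K)%N)); last by move=> j; rewrite inE.
rewrite -(big_mkord (fun j => (i <= j < i + K)%N) (fun _ => 1%N)).
rewrite (@big_cat_nat _ _ _ i) /=; [|lia|lia].
rewrite (@big_cat_nat _ _ _ (i + K) i) /=; [|lia|lia].
rewrite big_nat_cond big1; last by move=> j /andP [/andP [_ hj] /andP [hj' _]]; lia.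
rewrite [X in (_ + (_ + X))%N]big_nat_cond [X in (_ + (_ + X))%N]big1; last first.
  by move=> j /andP [/andP [hj _] /andP [_ hj']]; lia.
rewrite big_nat_cond (eq_bigl (fun j => (i <= j < i + K)%N && true)); last by move=> j; rewrite andbb andbT.
rewrite -(big_nat_cond _ _ _ _ (fun _ => true) (fun _ => 1%N)).
rewrite sum_nat_const_nat; lia.
Qed.

Lemma G1 (R : realType) (C K : nat) (X : nat -> R)
  (hK : (0 < K)%N) (hKC : (K < C)%N)
  (hX01 : forall j, (j < C)%N -> 0 <= X j <= 1)
  (hXinc : forall j, (j.+1 < C)%N -> X j < X j.+1)
  (y : R) (i : nat) (hi : (i <= C - K)%N) (a b : nat) :
  region C K X i y -> (i <= a < i + K)%N -> (b < C)%N -> ~~ (i <= b < i + K)%N ->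
  (y - X a) ^+ 2 <= (y - X b) ^+ 2 /\
  ((forall j, (j + K < C)%N -> y <> (X j + X (j + K)%N) / 2) ->
     (y - X a) ^+ 2 < (y - X b) ^+ 2).
Proof.
move=> [hr1 hr2] ha hb hnb.
have hXle := @Xle R C X hXinc. have hXlt := @Xlt R C X hXinc.
case: (ltnP b i) => hbi.
  have hi0 : i != 0%N by lia.
  rewrite (negbTE hi0) in hr1.
  have h1 := hXle b i.-1 ltac:(lia) ltac:(lia).
  have h2 := hXle a (i + K).-1 ltac:(lia) ltac:(lia).
  have h3 := hXlt b a ltac:(lia) ltac:(lia).
  have h : (y - X a) ^+ 2 < (y - X b) ^+ 2 by apply: sq_lt1 => //; lra.
  by split => [|_]; [apply: ltW|].
have hbK : (i + K <= b)%N by lia.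
have hiC : i != (C - K)%N by lia.
rewrite (negbTE hiC) in hr2.
have h1 := hXle i a ltac:(lia) ltac:(lia).
have h2 := hXle (i + K) b ltac:(lia) ltac:(lia).
have h3 := hXlt a b ltac:(lia) ltac:(lia).
split.
  by apply: sq_le2 => //; [apply: ltW | lra].
move=> NM; have := NM i ltac:(lia) => hne.
apply: sq_lt2 => //.
have : y < (X i + X (i + K)%N) / 2.
  by rewrite lt_neqAle hr2 andbT; apply/eqP.
lra.
Qed.

Lemma G3 (R : realType) (C K : nat) (X : nat -> R)
  (hK : (0 < K)%N) (hKC : (K < C)%N)
  (hX01 : forall j, (j < C)%N -> 0 <= X j <= 1)
  (hXinc : forall j, (j.+1 < C)%N -> X j < X j.+1)
  (y : R) (hy : 0 <= y <= 1) (i : nat) (hi : (i <= C - K)%N) (a : nat) :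
  region C K X i y -> (i <= a < i + K)%N -> (y - X a) ^+ 2 < 1.
Proof.
move=> [hr1 hr2] ha.
have hXle := @Xle R C X hXinc. have hXlt := @Xlt R C X hXinc.
have hXa := hX01 a ltac:(lia).
have h1 : y - X a < 1.
  case: (posnP a) => [a0 | apos].
    have hi0 : i = 0%N by lia.
    have hiC : i != (C - K)%N by lia.
    rewrite (negbTE hiC) hi0 /= in hr2.
    have := hX01 0%N ltac:(lia). have := hX01 K ltac:(lia).
    rewrite a0. lra.
  have := hXlt 0%N a apos ltac:(lia). have := hX01 0%N ltac:(lia). lra.
have h2 : X a - y < 1.
  case: (ltnP a C.-1) => hac.
    have := hXlt a C.-1 hac ltac:(lia). have := hX01 C.-1 ltac:(lia). lra.
  have hi0 : i != 0%N by lia.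
  rewrite (negbTE hi0) in hr1.
  have := hX01 i.-1 ltac:(lia). have := hX01 (i + K).-1 ltac:(lia).
  have := hXlt i.-1 (i + K).-1 ltac:(lia) ltac:(lia).
  lra.
nra.
Qed.

Theorem lemma11 (R : realType) (C K : nat) (X : nat -> R)
  (hK : (0 < K)%N) (hKC : (K < C)%N)
  (hX01 : forall j, (j < C)%N -> 0 <= X j <= 1)
  (hXinc : forall j, (j.+1 < C)%N -> X j < X j.+1)
  (y : R) (hy : 0 <= y <= 1) (i : nat) (hi : (i <= C - K)%N) :
  (region C K X i y -> is_UC0 K X y (window C K i)) /\
  ((forall j, (j + K < C)%N -> y <> (X j + X (j + K)%N) / 2) ->
     ((forall T : {set 'I_C}, is_UC0 K X y T <-> T = window C K i)
      <-> region C K X i y)).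
Proof.
have hiK : (i + K <= C)%N by lia.
have hcard : #|window C K i| = K by apply: (card_window R).
pose w := fun j : 'I_C => dot2 (angle_pt y) (angle_pt (X j)).
have hw01 : forall j : 'I_C, 0 <= X j <= 1 := fun j => hX01 _ (ltn_ord j).
have hw0 : forall j, 0 <= w j by move=> j; apply: eng_ge0.
have inW : forall j : 'I_C, (j \in window C K i) = (i <= j < i + K)%N.
  by move=> j; rewrite inE.
have part1 : region C K X i y -> is_UC0 K X y (window C K i).
  move=> hreg; split; first by rewrite hcard.
  move=> T hT; rewrite /engagement_sum.
  apply: (@comb_le _ _ _ _ w) => //; first by rewrite hcard.
  move=> a b; rewrite !inW => ha hb.
  rewrite /w eng_le //.
  exact: (@G1 R C K X hK hKC hX01 hXinc y i hi a b hreg ha (ltn_ord b) hb).1.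
split => // NM; split.
  move=> huniq.
  have hUC : is_UC0 K X y (window C K i) by apply/huniq.
  have contra : forall a b : 'I_C, a \in window C K i -> b \notin window C K i ->
      w a < w b -> False.
    move=> a b ha hb hab.
    have [S [hS hlt]] := @swap_better _ _ _ w a b ha hb hab.
    have := hUC.2 S ltac:(by rewrite -hcard).
    rewrite /engagement_sum -/w leNgt.
    by rewrite hlt.
  split.
    case: eqP => [_|hi0]; first by case/andP: hy.
    rewrite ltNge; apply/negP => hle.
    have ha : ((i + K).-1 < C)%N by lia.
    have hb : (i.-1 < C)%N by lia.
    apply: (contra (Ordinal ha) (Ordinal hb)).
    - by rewrite inW /=; lia.
    - by rewrite inW /=; apply/negP; lia.
    have hXa := hX01 _ ha; have hXb := hX01 _ hb.
    rewrite /w /= eng_lt //.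
    apply: sq_lt2.
      apply: (@Xlt R C X hXinc); lia.
    have := NM i.-1 ltac:(lia).
    have -> : (i.-1 + K = (i + K).-1)%N by lia.
    move=> hne.
    have : y < (X i.-1 + X (i + K).-1) / 2.
      by rewrite lt_neqAle hle andbT; apply/eqP.
    lra.
  case: (i =P (C - K)%N) => [_|hi1]; first by case/andP: hy.
  rewrite leNgt; apply/negP => hgt.
  have ha : (i < C)%N by lia.
  have hb : (i + K < C)%N by lia.
  apply: (contra (Ordinal ha) (Ordinal hb)).
  - by rewrite inW /=; lia.
  - by rewrite inW /=; apply/negP; lia.
  have hXa := hX01 _ ha; have hXb := hX01 _ hb.
  rewrite /w /= eng_lt //.
  apply: sq_lt1.
    apply: (@Xlt R C X hXinc); lia.
  lra.
move=> hreg T; split; last by move=> ->; apply: part1.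
move=> hT; apply/eqP; apply/negPn/negP => hne.
have hlt : \sum_(j in T) w j < \sum_(j in window C K i) w j.
  apply: comb_lt => //.
  - move=> a; rewrite inW => ha; apply: eng_gt0.
    exact: (@G3 R C K X hK hKC hX01 hXinc y hy i hi a hreg ha).
  - by rewrite hcard; case: hT.
  - move=> a b; rewrite !inW => ha hb.
    rewrite /w eng_lt //.
    exact: (@G1 R C K X hK hKC hX01 hXinc y i hi a b hreg ha (ltn_ord b) hb).2.
have := hT.2 (window C K i) ltac:(by rewrite hcard).
by rewrite /engagement_sum -/w leNgt hlt.
Qed.
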